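(* Let $n\ge 1$. For a permutation $\pi\in S_n$, let $\Phi_2(\pi)$ be the deco polyomino of height $n$ whose code $(a_n,a_{n-1},\ldots,a_1)$ equals the right inversion vector $(c_1,c_2,\ldots,c_n)$ of $\pi$, i.e. $a_{n+1-i}=c_i$ for $i=1,\ldots,n$. Then $\pi$ is $321$-avoiding if and only if $\Phi_2(\pi)$ is a parallelogram polyomino.
   Context: Cells are unit squares $[i,i+1]\times[j,j+1]$ with integer $i,j$; a polyomino is a finite edge-connected set of cells, up to translation. A directed polyomino has a distinguished cell (the source) such that every cell can be reached from the source by a path of cells moving only North or East inside the polyomino. It is column-convex if each column (intersection with a vertical strip $[i,i+1]\times\mathbb{R}$) is connected. The (directed) height of a directed polyomino is the number of distinct diagonal lines $x+y=\text{const}$ passing through centers of its cells. A deco polyomino is a directed column-convex polyomino whose height is attained only in its last (rightmost) column, i.e. cells on the maximal diagonal lie only in the last column. Every deco polyomino of height $n$ is built uniquely by a sequence of $n$ steps starting from the empty polyomino; at step $j$ ($j=1,\ldots,n$) one performs either an elevation (add a cell at the bottom of the leftmost column of the current polyomino; step 1 is always of this kind) or a column pasting (add a new column of $k$ cells, $1\le k\le j-1$, to the left of the current polyomino so that the bottoms of the first two columns lie at the same level). Set $a_j=0$ for an elevation and $a_j=k$ for pasting a column of length $k$; the code of the polyomino is $(a_n,a_{n-1},\ldots,a_1)$, with $0\le a_j\le j-1$, and this gives a bijection between deco polyominoes of height $n$ and such sequences. The right inversion vector of $\pi=\pi_1\cdots\pi_n$ is $(c_1,\ldots,c_n)$ with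 $c_i=\#\{j>i:\pi_j<\pi_i\}$; it determines $\pi$ uniquely and $0\le c_i\le n-i$. A permutation is $321$-avoiding if there are no indices $i<j<k$ with $\pi_i>\pi_j>\pi_k$. A parallelogram polyomino is a polyomino bounded by two lattice paths using steps $(1,0)$ and $(0,1)$ which intersect only at their common origin and common endpoint. *)

(* Defs.v *)
From HB Require Import structures.
From mathcomp Require Import all_boot all_order all_fingroup all_algebra.
Set Implicit Arguments. Unset Strict Implicit. Unset Printing Implicit Defensive.
Import Order.TTheory GRing.Theory Num.Theory.

(* A cell (i,j) : int * int is the unit square [i,i+1] x [j,j+1].
   A polyomino (fixed representative of its translation class) is
   represented as a predicate on cells. *)
Definition cell := (int * int)%type.

Definition right_inv_vector (n : nat) (pi : 'S_n) : seq nat :=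
  [seq #|[set j : 'I_n | (i < j)%N && (pi j < pi i)%N]| | i : 'I_n <- enum 'I_n].

Definition avoids321 (n : nat) (pi : 'S_n) : Prop :=
  ~ exists i j k : 'I_n,
      [/\ (i < j)%N, (j < k)%N, (pi j < pi i)%N & (pi k < pi j)%N].

(* A column-convex polyomino built during the deco construction is stored as
   the list of its columns from left to right; column number x (starting at 0)
   is (b, l): its cells are (x, y) with b <= y < b + l. *)
Definition columns := seq (int * nat).

(* One step of the construction with letter a:
   a = 0 : elevation (add a cell at the bottom of the leftmost column;
           on the empty polyomino this creates a single cell);
   a = k > 0 : paste a new column of k cells to the left, with its bottom
           at the level of the bottom of the current first column. *)
Definition deco_step (cols : columns) (a : nat) : columns :=
  if a == 0%N then
    match cols with
    | [::] => [:: (0%R, 1%N)]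
    | (b, l) :: r => ((b - 1)%R, l.+1) :: r
    end
  else
    match cols with
    | [::] => [:: (0%R, a)]
    | (b, l) :: r => (b, a) :: cols
    end.

(* The deco polyomino with code (a_n, ..., a_1): steps j = 1, ..., n
   perform letter a_j.  [code] is the sequence [:: a_n; ...; a_1]. *)
Definition deco_of_code (code : seq nat) : columns :=
  foldl deco_step [::] (rev code).

Definition cells_of (cols : columns) (c : cell) : Prop :=
  exists2 i, (i < size cols)%N &
    c.1 = (i%:Z)%R /\ ((nth (0%R, 0%N) cols i).1 <= c.2 <
                        (nth (0%R, 0%N) cols i).1 + ((nth (0%R, 0%N) cols i).2)%:Z)%R.

Definition Phi2 (n : nat) (pi : 'S_n) : columns :=
  deco_of_code (right_inv_vector pi).

(* A lattice path from origin o is a sequence of steps: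
   true = East step (1,0), false = North step (0,1). *)
Definition path_pos (o : int * int) (s : seq bool) (k : nat) : int * int :=
  ((o.1 + (count id (take k s))%:Z)%R, (o.2 + (count negb (take k s))%:Z)%R).

Definition east_step_at (o : int * int) (s : seq bool) (k : nat) (x y : int) :=
  [/\ (k < size s)%N, nth false s k = true & path_pos o s k = (x, y)].

Definition enclosed (o : int * int) (s t : seq bool) (c : cell) : Prop :=
  exists k1 k2 h1 h2,
    [/\ east_step_at o s k1 c.1 h1, east_step_at o t k2 c.1 h2 &
        ((h1 <= c.2 < h2)%R \/ (h2 <= c.2 < h1)%R)].

(* P is a parallelogram polyomino: it is the region bounded by two lattice
   paths with unit North/East steps having a common origin and a common
   endpoint and meeting at no other lattice point (two such paths share a
   point iff they share a lattice vertex). *)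
Definition parallelogram (P : cell -> Prop) : Prop :=
  exists (o : int * int) (s t : seq bool),
    [/\ path_pos o s (size s) = path_pos o t (size t),
        (forall k1 k2, (k1 <= size s)%N -> (k2 <= size t)%N ->
           path_pos o s k1 = path_pos o t k2 ->
           (k1 = 0%N /\ k2 = 0%N) \/ (k1 = size s /\ k2 = size t)) &
        (forall c, P c <-> enclosed o s t c)].

(* Main.v *)
Require Import Defs.
From mathcomp Require Import all_boot all_order all_fingroup all_algebra.
From mathcomp Require Import zify.
Import Order.TTheory GRing.Theory Num.Theory.
Set Implicit Arguments. Unset Strict Implicit.

Local Open Scope ring_scope.

Definition stp (o : int * int) (c : bool) : int * int :=
  (o.1 + (c : nat)%:Z, o.2 + ((~~ c) : nat)%:Z).

Lemma pp0 o s : path_pos o s 0 = o.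
Proof. by case: o => a b; rewrite /path_pos take0 /= !addr0. Qed.

Lemma ppS o c s k : path_pos o (c :: s) k.+1 = path_pos (stp o c) s k.
Proof.
rewrite /path_pos /stp /=; case: c => /=;
  by rewrite !PoszD !addrA ?addr0 ?add0r.
Qed.

Lemma es0 o c s x y : east_step_at o (c :: s) 0 x y <-> (c = true /\ o = (x, y)).
Proof.
rewrite /east_step_at pp0 /=; split; first by case.
by case=> -> ->.
Qed.

Lemma esS o c s k x y :
  east_step_at o (c :: s) k.+1 x y <-> east_step_at (stp o c) s k x y.
Proof. by rewrite /east_step_at ppS /= ltnS. Qed.

Lemma ppsum o s k : (k <= size s)%N ->
  ((path_pos o s k).1 - o.1) + ((path_pos o s k).2 - o.2) = k%:Z.
Proof.
move=> hk; rewrite /path_pos /=.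
have := count_predC id (take k s); rewrite size_takel //.
rewrite (@eq_count _ (predC id) negb) //; lia.
Qed.

Lemma pp_nseq n s o k : (k <= n)%N ->
  path_pos o (nseq n false ++ s) k = (o.1, o.2 + k%:Z).
Proof.
elim: n o k => [|n IH] o k.
  by rewrite leqn0 => /eqP ->; rewrite pp0 addr0; case: o.
case: k => [_|k hk]; first by rewrite pp0 addr0; case: o.
rewrite /= ppS IH //= /stp /= addr0 -addrA; congr (_, _ + _); lia.
Qed.

Lemma pp_nseq2 n s o k :
  path_pos o (nseq n false ++ s) (n + k) = path_pos (o.1, o.2 + n%:Z) s k.
Proof.
elim: n o => [|n IH] o; first by rewrite add0n addr0; case: o.
rewrite addSn /= ppS IH /stp /= addr0 -addrA; congr (path_pos (_, _ + _) _ _); lia.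
Qed.

Lemma es_nseq n s o k x y : east_step_at o (nseq n false ++ s) k x y ->
  exists2 k', k = (n + k')%N & east_step_at (o.1, o.2 + n%:Z) s k' x y.
Proof.
elim: n o k => [|n IH] o k.
  by move=> h; exists k => //; rewrite addr0; case: o h.
case: k => [/es0 [] //|k].
rewrite /= esS => /IH [k' -> h]; exists k' => //.
move: h; rewrite /stp /= addr0 -addrA; congr east_step_at; congr (_, _ + _); lia.
Qed.

Lemma es_nseq2 n s o k x y : east_step_at (o.1, o.2 + n%:Z) s k x y ->
  east_step_at o (nseq n false ++ s) (n + k) x y.
Proof.
elim: n o => [|n IH] o.
  by rewrite addr0 add0n; case: o.
rewrite addSn /= esS => h; apply: IH.
move: h; rewrite /stp /= addr0 -addrA; congr east_step_at; congr (_, _ + _); lia.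
Qed.
Arguments path_pos : simpl never.
Arguments east_step_at : simpl never.

Fixpoint mkp (y0 : int) (es : seq int) (H : int) : seq bool :=
  match es with
  | [::] => nseq (absz (H - y0)) false
  | e :: es' => nseq (absz (e - y0)) false ++ true :: mkp e es' H
  end.

Lemma absz_sub (a b : int) : a <= b -> (absz (b - a))%:Z = b - a.
Proof. move=> h; rewrite gez0_abs // subr_ge0 //. Qed.

Lemma mkp_pos (es : seq int) (y0 H : int) ox k : path Order.le y0 (rcons es H) ->
  (k <= size (mkp y0 es H))%N ->
  exists i, [/\ (i <= size es)%N,
    (path_pos (ox, y0) (mkp y0 es H) k).1 = ox + i%:Z &
    nth H (y0 :: es) i <= (path_pos (ox, y0) (mkp y0 es H) k).2 <= nth H es i].
Proof.
elim: es y0 ox k => [|e es IH] y0 ox k.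
  rewrite [mkp _ _ _]/= [path _ _ _]/= andbT size_nseq => hy hk; exists 0%N.
  rewrite -[nseq _ _]cats0 pp_nseq //= addr0; split => //.
  have := absz_sub hy; lia.
rewrite [mkp _ (_ :: _) _]/= [path _ _ _]/=.
move=> /andP [hy hp]; rewrite size_cat size_nseq [size (_ :: _)]/= => hk.
have hd := absz_sub hy.
case: (leqP k (absz (e - y0))) => hk1.
  exists 0%N; rewrite pp_nseq //= addr0; split => //; lia.
have [k' ek] : exists k', k = (absz (e - y0) + k'.+1)%N.
  by exists (k - (absz (e - y0)).+1)%N; lia.
subst k; rewrite pp_nseq2 ppS (_ : stp _ _ = (ox + 1, e)); last first.
  by rewrite /stp /= addr0 hd; congr (_, _); lia.
have [|i [hi h1 h2]] := IH e (ox + 1) k' hp; first by lia.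
exists i.+1; split => //; rewrite h1; lia.
Qed.

Lemma mkp_end (es : seq int) (y0 H : int) ox : path Order.le y0 (rcons es H) ->
  path_pos (ox, y0) (mkp y0 es H) (size (mkp y0 es H)) = (ox + (size es)%:Z, H).
Proof.
elim: es y0 ox => [|e es IH] y0 ox.
  rewrite [mkp _ _ _]/= [path _ _ _]/= andbT size_nseq => hy.
  rewrite -[nseq _ _]cats0 pp_nseq //= addr0.
  rewrite absz_sub //; congr (_, _); lia.
rewrite [mkp _ (_ :: _) _]/= [path _ _ _]/=.
move=> /andP [hy hp]; rewrite size_cat size_nseq [size (_ :: _)]/=.
rewrite pp_nseq2 ppS (_ : stp _ _ = (ox + 1, e)); last first.
  by rewrite /stp /= addr0 absz_sub //; congr (_, _); lia.
rewrite IH //; congr (_, _); rewrite [size (_ :: _)]/=; lia.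
Qed.

Lemma mkp_es (es : seq int) (y0 H : int) ox k x h : path Order.le y0 (rcons es H) ->
  east_step_at (ox, y0) (mkp y0 es H) k x h ->
  exists2 i, (i < size es)%N & x = ox + i%:Z /\ h = nth H es i.
Proof.
elim: es y0 ox k => [|e es IH] y0 ox k.
  by rewrite [mkp _ _ _]/= => _ [hk]; rewrite nth_nseq; case: ifP.
rewrite [mkp _ (_ :: _) _]/= [path _ _ _]/=.
move=> /andP [hy hp] /es_nseq [k' _].
have eo : ((ox, y0).1, (ox, y0).2 + (absz (e - y0))%:Z) = (ox, e).
  by rewrite /= absz_sub //; congr (_, _); lia.
rewrite eo.
case: k' => [/es0 [_ [<- <-]]|k']; first by exists 0%N => //; rewrite addr0.
rewrite esS (_ : stp _ _ = (ox + 1, e)); last by rewrite /stp /= addr0.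
move=> /IH [//|i hi [-> ->]].
exists i.+1 => //; split => //; lia.
Qed.

Lemma mkp_ex (es : seq int) (y0 H : int) ox i : path Order.le y0 (rcons es H) ->
  (i < size es)%N ->
  exists k, east_step_at (ox, y0) (mkp y0 es H) k (ox + i%:Z) (nth H es i).
Proof.
elim: es y0 ox i => [|e es IH] y0 ox i //.
rewrite [mkp _ (_ :: _) _]/= [path _ _ _]/=.
move=> /andP [hy hp] hi.
have eo : ((ox, y0).1, (ox, y0).2 + (absz (e - y0))%:Z) = (ox, e).
  by rewrite /= absz_sub //; congr (_, _); lia.
case: i hi => [_|i hi].
  exists (absz (e - y0) + 0)%N; apply: es_nseq2; rewrite eo.
  by apply/es0; rewrite addr0.
have [k hk] := IH e (ox + 1) i hp hi.
exists (absz (e - y0) + k.+1)%N; apply: es_nseq2; rewrite eo.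
rewrite esS (_ : stp _ _ = (ox + 1, e)); last by rewrite /stp /= addr0.
move: hk; congr east_step_at; lia.
Qed.

Lemma cnt_take_mono (p : pred bool) (s : seq bool) k k' : (k <= k')%N ->
  (count p (take k s) <= count p (take k' s))%N.
Proof.
move=> h; rewrite -(take_takel s h) -{2}(cat_take_drop k (take k' s)) count_cat.
exact: leq_addr.
Qed.

Lemma es_mono o s k k' x h x' h' :
  east_step_at o s k x h -> east_step_at o s k' x' h' -> x < x' -> h <= h'.
Proof.
case=> _ _ e1 [_ _ e2]; move: e1 e2; rewrite /path_pos => -[<- <-] [<- <-].
case: (leqP k' k) => hk.
  have := cnt_take_mono id s hk; lia.
have := cnt_take_mono negb s (ltnW hk); lia.
Qed.

Lemma pos_is0 o s k : (k <= size s)%N -> path_pos o s k = o -> k = 0%N.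
Proof.
move=> hk e; have := ppsum o hk; rewrite e; lia.
Qed.

Lemma pos_isN o s k : (k <= size s)%N ->
  path_pos o s k = path_pos o s (size s) -> k = size s.
Proof.
move=> hk e; have := ppsum o hk; have := ppsum o (leqnn (size s)); rewrite e; lia.
Qed.

Lemma chain_gen (g : nat -> int) m y0 H : (0 < m)%N -> y0 <= g 0%N ->
  (forall i, (i.+1 < m)%N -> g i <= g i.+1) -> g m.-1 <= H ->
  path Order.le y0 (rcons (mkseq g m) H).
Proof.
move=> hm h0 hs hH; apply/(pathP H) => i; rewrite size_rcons size_mkseq ltnS => hi.
rewrite nth_rcons_default.
case: i hi => [|i] hi.
  by rewrite /= nth_mkseq.
rewrite [nth _ (_ :: _) _]/= nth_rcons_default nth_mkseq //.
case: (ltnP i.+1 m) => him.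
  by rewrite nth_mkseq //; exact: hs.
have -> : i = m.-1 by lia.
by rewrite nth_default // size_mkseq; lia.
Qed.

Fixpoint invc (cols : columns) : bool :=
  match cols with
  | [::] => true
  | (b, l) :: r =>
      [&& (0 < l)%N,
          (if r is (b', l') :: _ then (b <= b') && (b' < b + l%:Z) else true)
        & invc r]
  end.

Fixpoint goodc (cols : columns) : bool :=
  match cols with
  | (b, l) :: ((((b', l') :: _) as r)) => (b + l%:Z <= b' + l'%:Z) && goodc r
  | _ => true
  end.

Definition bot (cols : columns) i := (nth (0%R, 0%N) cols i).1.
Definition len (cols : columns) i := (nth (0%R, 0%N) cols i).2.
Definition top (cols : columns) i := bot cols i + (len cols i)%:Z.

Lemma invc_len cols i : invc cols -> (i < size cols)%N -> (0 < len cols i)%N.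
Proof.
elim: cols i => [|[b l] r IH] i //= /and3P [hl _ hr].
by case: i => [|i] //= hi; apply: IH.
Qed.

Lemma invc_bot cols i : invc cols -> (i.+1 < size cols)%N ->
  bot cols i <= bot cols i.+1 /\ bot cols i.+1 < top cols i.
Proof.
elim: cols i => [|[b l] r IH] i //= /and3P [hl hh hr].
case: i => [|i] /= hi.
  by case: r hh hi {IH hr} => [|[b' l'] r] //= /andP [h1 h2].
exact: IH.
Qed.

Lemma goodc_nth cols : goodc cols <->
  (forall i, (i.+1 < size cols)%N -> top cols i <= top cols i.+1).
Proof.
elim: cols => [|[b l] r IH] //=.
case: r IH => [|[b' l'] r] IH; first by split => // _ [].
split.
  move=> /andP [h1 /IH h2] [|i] hi //; exact: h2.
move=> h; apply/andP; split; first exact: (h 0%N).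
by apply/IH => i hi; apply: (h i.+1).
Qed.

Lemma cellsP cols x y : cells_of cols (x, y) <->
  exists2 i, (i < size cols)%N & x = i%:Z /\ bot cols i <= y < top cols i.
Proof. by []. Qed.

Lemma geo_par cols : invc cols -> parallelogram (cells_of cols) -> goodc cols.
Proof.
move=> hi [o [s [t [_ _ hc]]]].
apply/goodc_nth => i hi1.
have hl := invc_len hi (ltnW hi1).
have [hb1 hb2] := invc_bot hi hi1.
have c1 : cells_of cols (i%:Z, top cols i - 1).
  apply/cellsP; exists i; first exact: ltnW.
  by split => //; rewrite /top; lia.
have c2 : cells_of cols (i.+1%:Z, bot cols i.+1).
  apply/cellsP; exists i.+1 => //; split => //.
  by have := invc_len hi hi1; rewrite /top; lia.
have [k1 [k2 [h1 [h2 [e1 e2 d]]]]] := (hc _).1 c1.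
have [k1' [k2' [h1' [h2' [e1' e2' d']]]]] := (hc _).1 c2.
have m1 := es_mono e1 e1' (ltac:(rewrite /=; lia)).
have m2 := es_mono e2 e2' (ltac:(rewrite /=; lia)).
have c3 : cells_of cols (i.+1%:Z, top cols i - 1).
  apply/(hc _); exists k1', k2', h1', h2'; split => //=.
  move: d d' => /=; lia.
move/cellsP: c3 => [j hj [ej hj2]].
have ej' : j = i.+1 by lia.
subst j; lia.
Qed.

Lemma par_geo cols : invc cols -> (0 < size cols)%N -> goodc cols ->
  parallelogram (cells_of cols).
Proof.
move=> hi hm /goodc_nth hg.
have hs : path Order.le (bot cols 0) (rcons (mkseq (bot cols) (size cols)) (top cols (size cols).-1)).
  apply: chain_gen => //.
  - by move=> i h; case: (invc_bot hi h).
  - by rewrite /top; lia.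
have ht : path Order.le (bot cols 0) (rcons (mkseq (top cols) (size cols)) (top cols (size cols).-1)).
  apply: chain_gen => //.
  by rewrite /top; lia.
exists (0, bot cols 0), (mkp (bot cols 0) (mkseq (bot cols) (size cols)) (top cols (size cols).-1)),
  (mkp (bot cols 0) (mkseq (top cols) (size cols)) (top cols (size cols).-1)).
split.
- by rewrite !mkp_end // !size_mkseq.
- move=> k1 k2 hk1 hk2 e.
  have [i [hi1 ex1 hy1]] := mkp_pos 0 hs hk1.
  have [j [hj1 ex2 hy2]] := mkp_pos 0 ht hk2.
  rewrite size_mkseq in hi1 hj1.
  rewrite e in ex1 hy1.
  case E2: (path_pos _ _ k2) e ex1 ex2 hy1 hy2 => [x y] e ex1 ex2 hy1 hy2.
  rewrite /= in ex1 ex2 hy1 hy2.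
  have eij : i = j by lia.
  subst j.
  case: i hi1 hj1 ex1 ex2 hy1 hy2 => [|i] hi1 _ ex1 _.
    rewrite /= nth_mkseq //= => hy1 hy2; left.
    have eo : (x, y) = (0, bot cols 0) by congr (_, _); lia.
    rewrite eo in e E2.
    by split; [exact: (pos_is0 hk1 e) | exact: (pos_is0 hk2 E2)].
  case: (ltnP i.+1 (size cols)) => him.
    rewrite /= !nth_mkseq // ?(ltnW him).
    move=> h1 h2; exfalso; have [_ hb] := invc_bot hi him; lia.
  move=> /= hy1 hy2; right.
  have e3 : nth (top cols (size cols).-1) (mkseq (bot cols) (size cols)) i.+1
      = top cols (size cols).-1 by rewrite nth_default // size_mkseq.
  have e4 : nth (top cols (size cols).-1) (mkseq (top cols) (size cols)) i
      = top cols (size cols).-1 by rewrite nth_mkseq //; congr top; lia.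
  rewrite e3 in hy1; rewrite e4 in hy2.
  have eo : (x, y) = (0 + (size cols)%:Z, top cols (size cols).-1).
    by congr (_, _); lia.
  rewrite eo in e E2.
  split.
    by apply: (pos_isN hk1); apply: (etrans e); rewrite mkp_end // size_mkseq.
  by apply: (pos_isN hk2); apply: (etrans E2); rewrite mkp_end // size_mkseq.
- case=> x y; split.
    move/cellsP=> [j hj [-> hy]].
    have [k1 hk1] := mkp_ex 0 hs (ltac:(rewrite size_mkseq; exact: hj)).
    have [k2 hk2] := mkp_ex 0 ht (ltac:(rewrite size_mkseq; exact: hj)).
    rewrite add0r !nth_mkseq // in hk1 hk2.
    exists k1, k2, (bot cols j), (top cols j); split => //; left; exact: hy.
  move=> [k1 [k2 [h1 [h2 [e1 e2 d]]]]].
  have [i hi1 [ex1 eh1]] := mkp_es hs e1.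
  have [j hj1 [ex2 eh2]] := mkp_es ht e2.
  rewrite size_mkseq in hi1 hj1.
  rewrite /= in ex1 ex2.
  have eij : i = j by lia.
  subst j.
  rewrite nth_mkseq // in eh1; rewrite nth_mkseq // in eh2.
  apply/cellsP; exists i => //; split; first by lia.
  move: d; rewrite eh1 eh2 /=; rewrite /top; lia.
Qed.

Lemma geo cols : invc cols -> (0 < size cols)%N ->
  (parallelogram (cells_of cols) <-> goodc cols).
Proof.
move=> hi hm; split; [exact: geo_par | exact: par_geo].
Qed.

Definition Fcols (c : seq nat) : columns := foldr (fun a acc => deco_step acc a) [::] c.

Lemma deco_Fcols c : deco_of_code c = Fcols c.
Proof. by rewrite /deco_of_code foldl_rev. Qed.

Definition len0 (cols : columns) : nat := (head (0%R, 0%N) cols).2.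

Lemma len0_step cols a : len0 (deco_step cols a) = if a == 0%N then (len0 cols).+1 else a.
Proof. by case: cols => [|[b l] r]; case: a. Qed.

Lemma invc_step cols a : invc cols -> invc (deco_step cols a).
Proof.
case: cols => [|[b l] r]; case: a => [|a] //=.
  move=> /and3P [hl hh hr]; rewrite hr andbT /=.
  case: r hh {hr} => [|[b' l'] r] //= /andP [h1 h2]; apply/andP; split; lia.
move=> /and3P [hl hh hr]; rewrite hl hh hr /=; apply/andP; split => //; lia.
Qed.

Lemma invc_F c : invc (Fcols c).
Proof. by elim: c => [|a c IH] //=; apply: invc_step. Qed.

Lemma size_F c : (0 < size c)%N -> (0 < size (Fcols c))%N.
Proof. by case: c => [|a c] //= _; case: (Fcols c) => [|[b l] r]; case: a. Qed.

Lemma F_nil c : (Fcols c == [::]) = (c == [::]).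
Proof. by case: c => [|a c] //=; case: (Fcols c) => [|[b l] r]; case: a. Qed.

Lemma goodc_step cols a : goodc (deco_step cols a) =
  goodc cols && [|| a == 0%N, cols == [::] | (a <= len0 cols)%N].
Proof.
case: cols => [|[b l] r]; case: a => [|a] //=.
- rewrite andbT; case: r => [|[b' l'] r] //=.
  by rewrite (_ : b - 1 + (l.+1)%:Z = b + l%:Z) //; lia.

  rewrite /len0 /= [RHS]andbC; congr andb.
  by rewrite lerD2l lez_nat.
Qed.

Lemma goodF c : goodc (Fcols c) <->
  (forall i, (i.+1 < size c)%N ->
     nth 0%N c i = 0%N \/ (nth 0%N c i <= len0 (Fcols (drop i.+1 c)))%N).
Proof.
elim: c => [|a c IH] //=.
rewrite goodc_step F_nil; split.
  move=> /andP [/IH h1 h2] [|i] hi /=.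
    rewrite drop0; case/or3P: h2 => [/eqP|/eqP|] h; [by left | | by right].
    by subst c.
  exact: h1.
move=> h; apply/andP; split.
  by apply/IH => i hi; apply: (h i.+1).
case: c h {IH} => [|a' c] h; first by rewrite orbT.
have := h 0%N isT; rewrite /= => -[->|->] //; by rewrite orbT.
Qed.

Local Close Scope ring_scope.

Definition cnt (f : nat -> nat) n i := count (fun k => (i < k) && (f k < f i)) (iota 0 n).

Definition setting (n : nat) (f : nat -> nat) (c : seq nat) :=
  [/\ size c = n, (forall j, j < n -> f j < n),
      (forall j k, j < n -> k < n -> f j = f k -> j = k) &
      (forall i, i < n -> nth 0 c i = cnt f n i)].

Fixpoint Gk (f : nat -> nat) (c : seq nat) (n k j : nat) : nat :=
  match k with
  | 0 => n
  | k'.+1 => if 0 < nth 0 c j then f j else Gk f c n k' j.+1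
  end.

Definition G f c n j := Gk f c n (n - j) j.
Definition Lc c j := len0 (Fcols (drop j c)).
Definition OK c := forall i, i.+1 < size c -> nth 0 c i = 0 \/ nth 0 c i <= Lc c i.+1.
Definition av f n := ~ exists i j k, [/\ i < j, j < k, k < n, f j < f i & f k < f j].

Lemma G_rec f c n j : j < n -> G f c n j = if 0 < nth 0 c j then f j else G f c n j.+1.
Proof. by move=> h; rewrite /G -subnSK. Qed.

Lemma G_n f c n : G f c n n = n.
Proof. by rewrite /G subnn. Qed.

Lemma G_cases f c n j : j <= n ->
  G f c n j = n \/ exists m, [/\ j <= m, m < n, 0 < nth 0 c m & G f c n j = f m].
Proof.
move=> hj; have [k ek] : exists k, n - j = k by eexists.
elim: k j hj ek => [|k IH] j hj ek.
  by left; rewrite /G ek.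
have hjn : j < n by lia.
rewrite G_rec //; case: ifP => hc.
  by right; exists j; split.
have [|] := IH j.+1 hjn (ltac:(lia)); first by left.
by move=> [m [h1 h2 h3 h4]]; right; exists m; split => //; lia.
Qed.

Lemma cnt_rest f n i : i < n ->
  cnt f n i = count (fun k => f k < f i) (iota i.+1 (n - i.+1)).
Proof.
move=> hi; rewrite /cnt (_ : n = i.+1 + (n - i.+1)); last by lia.
rewrite iotaD count_cat add0n (_ : i.+1 + (n - i.+1) - i.+1 = n - i.+1); last by lia.
rewrite (eq_in_count (a2 := pred0)); last first.
  by move=> k; rewrite mem_iota /= => h; apply/negbTE; lia.
rewrite count_pred0 add0n; apply: eq_in_count => k; rewrite mem_iota => /andP [h _].
by rewrite /= h.
Qed.

Lemma c0P n f c j : setting n f c -> j < n -> nth 0 c j = 0 ->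
  forall k, j < k -> k < n -> f j < f k.
Proof.
case=> hs hf hinj hc hj h0 k hjk hk.
move: h0; rewrite hc // cnt_rest // => /eqP; rewrite -leqn0 leqNgt -has_count.
move=> /hasPn /(_ k); rewrite mem_iota; move/(_ (ltac:(lia))).
rewrite -leqNgt leq_eqVlt => /orP [/eqP e|//].
by have := hinj _ _ hj hk e; lia.
Qed.

Lemma Lc_formula n f c j : setting n f c -> j <= n ->
  Lc c j = count (fun k => f k < G f c n j) (iota j (n - j)).
Proof.
move=> hS; have [hs hf hinj hc] := hS.
move=> hj; have [k ek] : exists k, n - j = k by eexists.
elim: k j hj ek => [|k IH] j hj ek.
  have -> : j = n by lia.
  by rewrite /Lc drop_oversize ?hs // subnn.
have hjn : j < n by lia.
rewrite /Lc (drop_nth 0) ?hs // /= len0_step -/(Lc c j.+1).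
rewrite ek /= G_rec //.
rewrite IH //; last by lia.
rewrite (_ : n - j.+1 = k); last by lia.
case: eqP => hc0.
  rewrite hc0 /=.
  have -> : f j < G f c n j.+1.
    have [->|[m [h1 h2 h3 ->]]] := G_cases f c (ltac:(exact: hjn)).
      exact: hf.
    apply: (c0P hS hjn hc0); lia.
  by rewrite add1n.
have hpos : 0 < nth 0 c j by rewrite lt0n; apply/eqP.
rewrite hpos ltnn add0n hc // cnt_rest //.
by rewrite (_ : n - j.+1 = k) //; lia.
Qed.

Lemma cnt_pos n f c i : setting n f c -> i < n -> 0 < nth 0 c i ->
  exists k, [/\ i < k, k < n & f k < f i].
Proof.
case=> hs hf hinj hc hi; rewrite hc // /cnt -has_count => /hasP [k].
by rewrite mem_iota => /andP [_ hk] /andP [h1 h2]; exists k; split.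
Qed.

Lemma cnt_pos2 n f c i k : setting n f c -> i < k -> k < n -> f k < f i ->
  0 < nth 0 c i.
Proof.
case=> hs hf hinj hc hik hk hf'; rewrite hc; last by lia.
rewrite /cnt -has_count; apply/hasP; exists k; last by rewrite hik.
by rewrite mem_iota; lia.
Qed.

Lemma ok_lt n f c i : setting n f c -> OK c -> i.+1 < n -> 0 < nth 0 c i ->
  f i < G f c n i.+1.
Proof.
move=> hS; have [hs hf hinj hc] := hS.
move=> hok hin hpos; rewrite ltnNge; apply/negP => hle.
have := hok i (ltac:(rewrite hs; exact: hin)).
rewrite lt0n in hpos; case=> [e|]; first by rewrite e in hpos.
rewrite (Lc_formula hS (ltnW hin)); rewrite hc; last by lia.
rewrite cnt_rest; last by lia.
have [eG|[m [h1 h2 h3 eG]]] := G_cases f c (ltnW hin).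
  by rewrite eG in hle; have := hf i (ltac:(lia)); lia.
rewrite eG; rewrite eG in hle.
have hfm : f m < f i.
  rewrite ltn_neqAle hle andbT; apply/eqP => e.
  by have := hinj m i h2 (ltac:(lia)) e; lia.
set s := iota i.+1 (n - i.+1).
have h4 : count (predU (fun k => f k < f m) (pred1 m)) s <= count (fun k => f k < f i) s.
  apply: sub_count => k /= /orP [h|/eqP ->] //; lia.
have h5 := count_predUI (fun k => f k < f m) (pred1 m) s.
have h6 : count (predI (fun k => f k < f m) (pred1 m)) s = 0.
  by apply/eqP; rewrite -leqn0 leqNgt -has_count; apply/hasPn => k _ /=;
     apply/negP => /andP [h /eqP e]; rewrite e ltnn in h.
have h7 : count (pred1 m) s = 1.
  by rewrite count_uniq_mem ?iota_uniq // mem_iota; apply/eqP; rewrite eqb1; lia.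
rewrite h6 h7 in h5; lia.
Qed.

Lemma G_bound n f c j j' : setting n f c -> OK c -> j < n -> 0 < nth 0 c j ->
  j' <= j -> G f c n j' <= f j.
Proof.
move=> hS hok hj hpos hj'.
have [d ed] : exists d, j - j' = d by eexists.
elim: d j' hj' ed => [|d IH] j' hj' ed.
  have -> : j' = j by lia.
  by rewrite G_rec // hpos.
rewrite G_rec; last by lia.
have := IH j'.+1 (ltac:(lia)) (ltac:(lia)).
case: ifP => // hp h.
have := @ok_lt n f c j' hS hok (ltac:(lia)) hp; lia.
Qed.

Lemma comb n f c : setting n f c -> (av f n <-> OK c).
Proof.
move=> hS; have [hs hf hinj hc] := hS; split.
  move=> hav i hi; rewrite hs in hi.
  case: (posnP (nth 0 c i)) => hpos; first by left.
  right; rewrite (Lc_formula hS (ltnW hi)) hc; last by lia.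
  rewrite cnt_rest; last by lia.
  apply: sub_count => k /= hk.
  have [eG|[m [h1 h2 h3 eG]]] := G_cases f c (ltnW hi).
    by rewrite eG; have := hf i (ltac:(lia)); lia.
  rewrite eG; rewrite ltnNge; apply/negP => hle.
  have [k' [hk1 hk2 hk3]] := cnt_pos hS h2 h3.
  apply: hav; exists i, m, k'; split => //; lia.
move=> hok [i [j [k [hij hjk hkn h1 h2]]]].
have hpi := cnt_pos2 hS hij (ltac:(lia)) h1.
have hpj := cnt_pos2 hS hjk hkn h2.
have := @ok_lt n f c i hS hok (ltac:(lia)) hpi.
have := @G_bound n f c j i.+1 hS hok (ltac:(lia)) hpj (ltac:(exact: hij)).
lia.
Qed.

Lemma cardcount n (P : pred 'I_n) : #|[set j | P j]| = count P (enum 'I_n).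
Proof. rewrite cardsE cardE -deprecated_filter_index_enum size_filter enumT //. Qed.

Theorem mainTheorem1 (n : nat) (hn : (0 < n)%N) (pi : 'S_n) :
  avoids321 pi <-> parallelogram (cells_of (Phi2 pi)).
Proof.
case: n hn pi => [//|n'] _ pi.
pose f := fun j => nat_of_ord (pi (inord j)).
pose c := right_inv_vector pi.
have hfv : forall o : 'I_n'.+1, f o = pi o by move=> o; rewrite /f inord_val.
have hsz : size c = n'.+1 by rewrite /c /right_inv_vector size_map size_enum_ord.
have hS : setting n'.+1 f c.
  split => //.
  - by move=> j _; exact: ltn_ord.
  - move=> j k hj hk /val_inj/perm_inj e.
    by rewrite -(inordK hj) -(inordK hk) e.
  - move=> i hi; rewrite /c /right_inv_vector (nth_map ord0) ?size_enum_ord //.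
    have eo : nth ord0 (enum 'I_n'.+1) i = inord i.
      by apply: ord_inj; rewrite nth_enum_ord // inordK.
    rewrite cardcount eo /cnt -val_enum_ord count_map; apply: eq_count => j /=.
    by rewrite hfv /f inordK.
have hP : Phi2 pi = Fcols c by rewrite /Phi2 deco_Fcols.
rewrite hP geo ?invc_F ?size_F ?hsz //.
rewrite goodF.
change (avoids321 pi <-> OK c).
rewrite -(comb hS).
split.
  move=> hav [i [j [k [hij hjk hkn h1 h2]]]]; apply: hav.
  exists (inord i), (inord j), (inord k).
  rewrite !inordK; try lia.
  by split => //.
move=> hav [i [j [k [hij hjk h1 h2]]]]; apply: hav.
exists i, j, k; split => //; rewrite ?hfv //.
Qed.
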